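(* Let $G=(V,E)$ be an undirected graph with $n$ vertices in which every vertex has degree at most $d$, and let $\pi$ be a uniformly random ordering of $V$. (i) For a $\delta$-prefix $P$ with $\delta=O(\log(n)/d)$, the longest directed path in the priority DAG of $G[P]$ has length $O(\log n)$ with high probability. (ii) For a $\delta$-prefix $P$ with $\delta\le 1/d$, the longest directed path in the priority DAG of $G[P]$ has length $O(\log n/\log\log n)$ with high probability.
   Context: For $0<\delta\le1$, the $\delta$-prefix of $V$ with respect to $\pi$ is the set of the $\delta|V|$ earliest vertices in $\pi$; $G[P]$ is the induced subgraph. The priority DAG directs each edge from its earlier endpoint to its later endpoint in $\pi$. ''With high probability'' means with probability at least $1-1/n^{c}$ for any constant $c$, affecting the constants in the asymptotic notation. *)

(* Defs.v *)
From HB Require Import structures.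
From mathcomp Require Import all_boot all_order all_algebra.
From mathcomp Require Import fingroup perm.
From mathcomp Require Import reals exp.
Set Implicit Arguments. Unset Strict Implicit. Unset Printing Implicit Defensive.
Import Order.TTheory GRing.Theory Num.Theory.
Local Open Scope ring_scope.

Section Defs.
Variable R : realType.

Definition simple_graph n (e : rel 'I_n) : Prop := symmetric e /\ irreflexive e.

Definition max_degree_le n (e : rel 'I_n) (d : nat) : Prop :=
  forall v : 'I_n, (#|[set u | e v u]| <= d)%N.

(* An ordering pi of V: vertex v is at position pi v (0-based); smaller = earlier. *)
(* delta-prefix: the floor(delta*n) earliest vertices in pi. *)
Definition delta_prefix n (pi : {perm 'I_n}) (delta : R) : {set 'I_n} :=
  [set v | ((pi v).+1)%:R <= delta * n%:R].

Definition priority_edge n (e : rel 'I_n) (pi : {perm 'I_n}) (P : {set 'I_n}) :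
  rel 'I_n := fun u v => [&& u \in P, v \in P, e u v & (pi u < pi v)%N].

Definition has_dpath n (e : rel 'I_n) (pi : {perm 'I_n}) (P : {set 'I_n}) (k : nat)
  : bool :=
  [exists t : (k.+1).-tuple 'I_n,
     (thead t \in P) && path (priority_edge e pi P) (thead t) (behead t)].

(* length (number of edges) of the longest directed path; a directed path has
   at most n vertices since pi strictly increases along it. *)
Definition longest_dpath n (e : rel 'I_n) (pi : {perm 'I_n}) (P : {set 'I_n}) : nat :=
  (\max_(k < n) (if has_dpath e pi P k then nat_of_ord k else 0))%N.

Definition prob_perm n (A : pred {perm 'I_n}) : R :=
  #|[set pi | A pi]|%:R / #|{perm 'I_n}|%:R.

End Defs.

(* Main.v *)
Require Import Defs.
From HB Require Import structures.
From mathcomp Require Import all_boot all_order all_algebra.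
From mathcomp Require Import fingroup perm.
From mathcomp Require Import reals exp.
From mathcomp Require Import sequences.
From mathcomp Require Import ring lra.
Set Implicit Arguments. Unset Strict Implicit. Unset Printing Implicit Defensive.
Import Order.TTheory GRing.Theory Num.Theory.
Import archimedean.Num.Theory.
Lemma card_bigcup_le (I T : finType) (P : pred I) (F : I -> {set T}) :
  #|\bigcup_(i | P i) F i| <= \sum_(i | P i) #|F i|.
Proof.
elim/big_rec2: _ => [|i m U _ leUn]; first by rewrite cards0.
by rewrite (leq_trans (leq_card_setU _ U).1) ?leq_add2l.
Qed.

Lemma path_all_in (T : Type) (r : rel T) (a : pred T) :
  (forall u v, r u v -> a v) -> forall x s, path r x s -> all a s.
Proof.
move=> H; move=> x s; elim: s x => [//|y s IH] x /= /andP[rxy ps].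
by rewrite (H _ _ rxy) (IH _ ps).
Qed.

Section Count.
Variable n : nat.
Local Notation T := 'I_n.
Definition ltp : rel T := fun x y => (x < y)%N.

Lemma ltp_irr : irreflexive ltp. Proof. by move=> x; rewrite /ltp ltnn. Qed.
Lemma ltp_tr : transitive ltp. Proof. by move=> x y z; apply: ltn_trans. Qed.

Lemma fiber_bound k (t q : k.-tuple T) : sorted ltp q ->
  #|[set pi : {perm T} | map_tuple pi t == q]| <= (n - k)`!.
Proof.
move=> sq.
case: (set_0Vmem [set pi : {perm T} | map_tuple pi t == q]) => [-> | [pi0 Hpi0]].
  by rewrite cards0.
rewrite inE in Hpi0.
have inj : injective (fun pi : {perm T} => (pi0^-1 * pi)%g) by apply: mulgI.
rewrite -(card_imset _ inj).
apply: leq_trans (subset_leq_card (B := perm_on (~: [set x in q])) _) _.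
  apply/subsetP => s /imsetP [pi Hpi ->]; rewrite inE in Hpi.
  apply/subsetP => x; rewrite !inE /= => Hx; apply/negP => xq; move/negP: Hx; apply.
  have : x \in map pi0 t by rewrite -[map pi0 t]/(val (map_tuple pi0 t)) (eqP Hpi0).
  case/mapP => y yt ->.
  have Eq : map pi t = map pi0 t.
    by rewrite -[map pi t]/(val (map_tuple pi t)) -[map pi0 t]/(val (map_tuple pi0 t)) (eqP Hpi) (eqP Hpi0).
  move/eq_in_map: Eq => /(_ y yt) Ey.
  by rewrite permM permK Ey.
rewrite card_perm.
have Hk : #|[set x in q]| = k.
  rewrite cardsE; move: (sorted_uniq ltp_tr ltp_irr sq) => /card_uniqP ->.
  by rewrite size_tuple.
have := cardsC [set x in q]; rewrite card_ord Hk => E.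
have kn : (k <= n)%N by apply: leq_trans (leq_addr #|~: [set x in q]| k) _; rewrite E.
have E2 : #|~: [set x in q]| = (n - k)%N by apply/eqP; rewrite -(eqn_add2l k) subnKC // E.
by rewrite E2.
Qed.

Lemma Q_bound k (S : {set T}) :
  #|[set q : k.-tuple T | sorted ltp q && all (mem S) q]| <= 'C(#|S|, k).
Proof.
rewrite -cards_draws.
set Q := [set q : k.-tuple T | _].
have inj : {in Q &, injective (fun q : k.-tuple T => [set x in q])}.
  move=> q1 q2; rewrite !inE => /andP[s1 _] /andP[s2 _] E.
  apply: val_inj; apply: (irr_sorted_eq ltp_tr ltp_irr s1 s2) => x.
  by move/setP: E => /(_ x); rewrite !inE.
rewrite -(card_in_imset inj); apply: subset_leq_card.
apply/subsetP => B /imsetP [q]; rewrite inE => /andP[sq aq] ->.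
rewrite inE; apply/andP; split.
  by apply/subsetP => x; rewrite inE => xq; move/allP: aq => /(_ x xq).
rewrite cardsE; move: (sorted_uniq ltp_tr ltp_irr sq) => /card_uniqP ->.
by rewrite size_tuple.
Qed.

Lemma walk_bound (e : rel T) d (Hd : max_degree_le e d) k x :
  #|[set s : k.-tuple T | path e x s]| <= d ^ k.
Proof.
elim: k x => [|k IH] x.
  apply: leq_trans (max_card _) _; by rewrite card_tuple.
have H : [set s : k.+1.-tuple T | path e x s] \subset \bigcup_(y in [set u | e x u])
   [set (cons_tuple y s : k.+1.-tuple T) | s in [set s : k.-tuple T | path e y s]].
  apply/subsetP => t; rewrite inE; case/tupleP: t => y s /= /andP[exy ps].
  apply/bigcupP; exists y; first by rewrite inE.
  by apply/imsetP; exists s; rewrite ?inE.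
apply: leq_trans (subset_leq_card H) _.
apply: leq_trans (card_bigcup_le _ _) _.
apply: (@leq_trans (\sum_(y in [set u | e x u]) d ^ k)).
  by apply: leq_sum => y _; apply: leq_trans (leq_imset_card _ _) (IH y).
by rewrite sum_nat_const expnS leq_mul2r Hd orbT.
Qed.

Lemma walks_bound (e : rel T) d (Hd : max_degree_le e d) k :
  #|[set t : k.+1.-tuple T | path e (thead t) (behead t)]| <= n * d ^ k.
Proof.
have H : [set t : k.+1.-tuple T | path e (thead t) (behead t)] \subset \bigcup_(y : T)
   [set (cons_tuple y s : k.+1.-tuple T) | s in [set s : k.-tuple T | path e y s]].
  apply/subsetP => t; rewrite inE; case/tupleP: t => y s /= ps.
  apply/bigcupP; exists y => //.
  by apply/imsetP; exists s; rewrite ?inE.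
apply: leq_trans (subset_leq_card H) _.
apply: leq_trans (card_bigcup_le _ _) _.
apply: (@leq_trans (\sum_(y : T) d ^ k)).
  by apply: leq_sum => y _; apply: leq_trans (leq_imset_card _ _) (walk_bound Hd _ _).
by rewrite sum_nat_const card_ord.
Qed.

Lemma count_main (e : rel T) d (Hd : max_degree_le e d) (S : {set T}) K :
  #|[set pi : {perm T} | has_dpath e pi [set v | pi v \in S] K]|
    <= n * d ^ K * 'C(#|S|, K.+1) * (n - K.+1)`!.
Proof.
set W := [set t : K.+1.-tuple T | path e (thead t) (behead t)].
set Q := [set q : K.+1.-tuple T | sorted ltp q && all (mem S) q].
have H : [set pi : {perm T} | has_dpath e pi [set v | pi v \in S] K] \subset
   \bigcup_(t in W) [set pi : {perm T} | map_tuple pi t \in Q].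
  apply/subsetP => pi; rewrite inE => /existsP [t /andP [hP pth]].
  apply/bigcupP; exists t.
    rewrite inE; apply: sub_path pth => u v; rewrite /priority_edge.
    by case/and4P.
  move: hP pth; case/tupleP: t => x s /= hx pth.
  rewrite !inE /=; apply/andP; split.
    rewrite path_map; apply: sub_path pth => u v; rewrite /priority_edge.
    by case/and4P.
  rewrite inE in hx; rewrite hx /= all_map.
  apply: (path_all_in _ pth) => u v; rewrite /priority_edge => /and4P[_ hv _ _].
  by rewrite inE in hv.
apply: leq_trans (subset_leq_card H) _.
apply: leq_trans (card_bigcup_le _ _) _.
apply: (@leq_trans (\sum_(t in W) (#|Q| * (n - K.+1)`!))).
  apply: leq_sum => t _.
  have H2 : [set pi : {perm T} | map_tuple pi t \in Q] \subset
      \bigcup_(q in Q) [set pi : {perm T} | map_tuple pi t == q].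
    apply/subsetP => pi; rewrite inE => hq; apply/bigcupP; exists (map_tuple pi t) => //.
    by rewrite inE.
  apply: leq_trans (subset_leq_card H2) _.
  apply: leq_trans (card_bigcup_le _ _) _.
  rewrite -sum_nat_const; apply: leq_sum => q; rewrite inE => /andP[sq _].
  exact: fiber_bound.
rewrite sum_nat_const mulnA leq_mul2r; apply/orP; right; apply: leq_mul.
  exact: walks_bound.
exact: Q_bound.
Qed.

End Count.

Local Open Scope ring_scope.

Section Real.
Variable R : realType.

Lemma ffact_bound (m n k : nat) (dl : R) : 0 <= dl -> dl <= 1 ->
  m%:R <= dl * n%:R -> (m ^_ k)%:R <= dl ^+ k * (n ^_ k)%:R.
Proof.
move=> d0 d1 hm.
have mn : (m <= n)%N.
  by rewrite -(ler_nat R); apply: le_trans hm _; rewrite ler_piMl.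
elim: k => [|k IH]; first by rewrite !ffactn0 expr0 mul1r.
have step : (m - k)%:R <= dl * (n - k)%:R :> R.
  have [km|mk] := leqP k m.
    rewrite natrB // natrB ?(leq_trans km mn) // mulrBr.
    by apply: lerB => //; rewrite ler_piMl.
  by rewrite (eqP (ltnW mk : (m - k == 0)%N)) // mulr_ge0.
rewrite !ffactnSr !natrM exprSr mulrACA.
by apply: ler_pM.
Qed.

Lemma ffact_fact_le (n k : nat) : (n ^_ k * (n - k)`! <= n`!)%N.
Proof.
have [kn|nk] := leqP k n; first by rewrite ffact_fact.
by rewrite ffact_small.
Qed.

Lemma card_lt_ord n M : (#|[set p : 'I_n | (p < M)%N]| <= M)%N.
Proof.
have [Mn|nM] := leqP M n.
  have H : [set p : 'I_n | (p < M)%N] \subset [set widen_ord Mn i | i : 'I_M].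
    apply/subsetP => p; rewrite inE => pM; apply/imsetP; exists (Ordinal pM) => //.
    by apply: val_inj.
  apply: leq_trans (subset_leq_card H) _.
  by apply: leq_trans (leq_imset_card _ _) _; rewrite card_ord.
by apply: leq_trans (max_card _) _; rewrite card_ord ltnW.
Qed.

Lemma has_dpath_trunc n (e : rel 'I_n) pi P k K : (K <= k)%N ->
  has_dpath e pi P k -> has_dpath e pi P K.
Proof.
move=> Kk /existsP [t /andP [hP pth]].
move: hP pth; case/tupleP: t => x s /= hx pth.
have sz : size (x :: take K s) == K.+1 by rewrite /= size_takel // size_tuple.
apply/existsP; exists (Tuple sz) => /=.
by rewrite /thead /tnth /= hx /= take_path.
Qed.

Lemma longest_ge n (e : rel 'I_n) pi P K : (0 < K)%N ->
  (K <= longest_dpath e pi P)%N -> has_dpath e pi P K.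
Proof.
move=> K0 HK.
case: (boolP [exists k : 'I_n, has_dpath e pi P k && (K <= k)%N]) =>
   [/existsP [k /andP[h kK]] | /existsPn H].
  exact: has_dpath_trunc kK h.
have Hm : (longest_dpath e pi P <= K.-1)%N.
  apply/bigmax_leqP => k _; move: (H k); case: (has_dpath e pi P k) => //= hk.
  by rewrite -ltnS prednK // ltnNge.
by move: (leq_trans HK Hm); case: (K) K0 => //= K' _; rewrite ltnn.
Qed.

Lemma prob_bound (n d K : nat) (e : rel 'I_n) (Hd : max_degree_le e d) (dl : R) :
  (0 < K)%N -> 0 < dl -> dl <= 1 ->
  prob_perm R (fun pi : {perm 'I_n} => (K <= longest_dpath e pi (delta_prefix pi dl))%N)
  <= n%:R * (d%:R * dl) ^+ K / (K`!)%:R.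
Proof.
move=> K0 dl0 dl1.
set S := [set p : 'I_n | ((p : nat).+1)%:R <= dl * n%:R].
have EP : forall pi : {perm 'I_n}, delta_prefix pi dl = [set v | pi v \in S].
  by move=> pi; apply/setP => v; rewrite !inE.
have H1 : (#|[set pi : {perm 'I_n} | (K <= longest_dpath e pi (delta_prefix pi dl))%N]|
     <= n * d ^ K * 'C(#|S|, K.+1) * (n - K.+1)`!)%N.
  apply: leq_trans (count_main Hd S K).
  apply: subset_leq_card; apply/subsetP => pi; rewrite !inE => h.
  by rewrite -EP; apply: longest_ge.
have HS : (#|S|)%:R <= dl * n%:R.
  set M := Num.truncn (dl * n%:R).
  have : (#|S| <= M)%N.
    apply: leq_trans (card_lt_ord n M); apply: subset_leq_card.
    apply/subsetP => p; rewrite !inE => hp.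
    by rewrite truncn_gt_nat.
  rewrite -(ler_nat R) => h; apply: le_trans h _.
  by rewrite truncn_le mulr_ge0 // ltW.
have key : (('C(#|S|, K.+1) * (n - K.+1)`!) * K`!)%:R <= dl ^+ K * (n`!)%:R.
  apply: le_trans (_ : (('C(#|S|, K.+1) * (n - K.+1)`!) * K.+1`!)%:R <= _).
    by rewrite ler_nat leq_mul2l factS leq_pmull ?orbT.
  rewrite mulnAC bin_ffact natrM.
  apply: le_trans (_ : dl ^+ K.+1 * (n ^_ K.+1)%:R * ((n - K.+1)`!)%:R <= _).
    by apply: ler_wpM2r => //; exact: ffact_bound (ltW dl0) dl1 HS.
  rewrite -mulrA -natrM.
  apply: le_trans (_ : dl ^+ K.+1 * (n`!)%:R <= _).
    by apply: ler_wpM2l; [exact: exprn_ge0 (ltW dl0) | rewrite ler_nat ffact_fact_le].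
  by apply: ler_wpM2r => //; rewrite exprSr ler_piMr // exprn_ge0 // ltW.
rewrite /prob_perm card_Sn.
have fpos : (0 : R) < (n`!)%:R by rewrite ltr0n fact_gt0.
have kpos : (0 : R) < (K`!)%:R by rewrite ltr0n fact_gt0.
rewrite ler_pdivrMr //.
apply: le_trans (_ : ((n * d ^ K * 'C(#|S|, K.+1) * (n - K.+1)`!)%N)%:R <= _).
  by rewrite ler_nat.
rewrite mulrAC ler_pdivlMr //.
rewrite -!mulnA !natrM exprMn natrX -!mulrA.
apply: ler_wpM2l => //; apply: ler_wpM2l; first exact: exprn_ge0.
by rewrite -!natrM mulnA.
Qed.

End Real.

Section An.
Variable R : realType.

Lemma onep_le_e (k : nat) : (0 < k)%N -> (1 + k%:R^-1) ^+ k <= expR 1 :> R.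
Proof.
move=> k0.
have kp : (0:R) < k%:R by rewrite ltr0n.
apply: le_trans (_ : expR (k%:R^-1) ^+ k <= _).
  apply: lerXn2r; rewrite ?nnegrE.
  - by rewrite addr_ge0 // invr_ge0 ltW.
  - exact: expR_ge0.
  - exact: expR_ge1Dx.
by rewrite -expRM_natl mulfV ?gt_eqF.
Qed.

Lemma fact_lb (K : nat) : (K%:R : R) ^+ K <= expR K%:R * (K`!)%:R.
Proof.
elim: K => [|K IH]; first by rewrite expr0 expR0 mul1r.
case: K IH => [|K] IH.
  by rewrite expr1 (_ : 1`! = 1)%N // mulr1 -{1}expR0 ler_expR ler01.
set k := (K.+1)%:R : R.
have kp : 0 < k by rewrite ltr0n.
have E : (K.+2)%:R = k * (1 + k^-1) :> R.
  by rewrite mulrDr mulr1 mulfV ?gt_eqF // -natr1.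
have -> : expR (K.+2)%:R = expR 1 * expR k :> R.
  by rewrite -expRD /k -natr1 addrC.
have h2 := onep_le_e (ltn0Sn K).
rewrite -/k in h2.
rewrite exprS factS natrM.
rewrite {2}E exprMn.
apply: le_trans (_ : K.+2%:R * ((expR k * (K.+1)`!%:R) * expR 1) <= _).
  apply: ler_wpM2l => //; apply: ler_pM.
  - exact: exprn_ge0 (ltW kp).
  - by apply: exprn_ge0; rewrite addr_ge0 // invr_ge0 ltW.
  - exact: IH.
  - exact: h2.
clearbody k; rewrite le_eqVlt; apply/orP; left; apply/eqP; ring.
Qed.


Lemma bound_i (n K : nat) (D C1 c : R) : (0 < n)%N -> (0 < K)%N -> 0 <= D ->
  0 < C1 -> 0 < c ->
  D <= C1 * ln n%:R -> (expR 2 * C1 + 1 + c) * ln n%:R < K%:R ->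
  n%:R * D ^+ K / (K`!)%:R <= expR (- c * ln n%:R).
Proof.
move=> n0 K0 D0 C10 c0 hD hK.
have L0 : 0 <= ln n%:R :> R by rewrite ln_ge0 // ler1n.
have nE : n%:R = expR (ln n%:R) :> R by rewrite lnK // posrE ltr0n.
move: hD hK L0 nE; set L := ln n%:R => hD hK L0 nE.
have kp : (0 : R) < K%:R by rewrite ltr0n.
move: hK kp (fact_lb K); set k := K%:R => hK kp hf.
have fp : (0 : R) < K`!%:R by rewrite ltr0n fact_gt0.
have e0 := expR_gt0 (1 : R).
have s1 : D ^+ K / K`!%:R <= (D * expR 1 / k) ^+ K.
  rewrite ler_pdivrMr // !exprMn -expRM_natl mulr1 exprVn.
  rewrite -[X in X <= _]mulr1 -!mulrA; apply: ler_wpM2l; first exact: exprn_ge0.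
  by rewrite mulrCA mulrC ler_pdivlMr ?exprn_gt0 // mul1r.
have e21 : expR (-1) * expR 2 = expR 1 :> R.
  by rewrite -expRD; congr expR; lra.
have s2 : D * expR 1 / k <= expR (-1).
  rewrite ler_pdivrMr // -e21 mulrC -mulrA; apply: ler_wpM2l; first exact: expR_ge0.
  apply: le_trans (_ : expR 2 * (C1 * L) <= _); first by apply: ler_wpM2l => //; exact: expR_ge0.
  apply: le_trans (ltW hK); rewrite mulrA !mulrDl.
  have : 0 <= c * L by rewrite mulr_ge0 // ltW.
  move: (expR 2 * C1 * L) => P; lra.
have s3 : (D * expR 1 / k) ^+ K <= expR (- k).
  have -> : expR (- k) = expR (-1) ^+ K by rewrite /k -expRM_natl mulrN1.
  apply: lerXn2r => //; rewrite nnegrE.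
    by rewrite divr_ge0 ?mulr_ge0 // ltW.
  exact: expR_ge0.
rewrite -mulrA; apply: le_trans (_ : n%:R * expR (- k) <= _).
  apply: ler_wpM2l; [exact: ler0n | exact: le_trans s1 s3].
rewrite nE -expRD ler_expR.
move: hK; rewrite !mulrDl => hK.
have : 0 <= expR 2 * C1 * L by rewrite mulr_ge0 // mulr_ge0 ?expR_ge0 // ltW.
rewrite mulNr mul1r in hK *.
move: (expR 2 * C1 * L) (c * L) hK => P Q hK; lra.
Qed.

Lemma e_le4 : expR 1 <= 4 :> R.
Proof.
have h : 2^-1 <= expR (- 2^-1) :> R.
  by apply: le_trans (expR_ge1Dx _); lra.
have E : expR 1 * (expR (- 2^-1) ^+ 2) = 1 :> R.
  rewrite -expRM_natl -expRD (_ : 1 + 2%:R * - 2^-1 = 0) ?expR0 //.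
  lra.
have y0 : (0:R) <= expR (- 2^-1) by exact: expR_ge0.
have e0 : (0:R) <= expR 1 by exact: expR_ge0.
move: E h y0 e0; move: (expR 1) (expR (- 2^-1)) => e y E h y0 e0.
have y2 : 2^-1 * 2^-1 <= y ^+ 2 by rewrite expr2; apply: ler_pM => //; lra.
have := ler_wpM2l e0 y2; rewrite E; lra.
Qed.

Lemma ln_le_half (Y : R) : 0 < Y -> ln Y <= Y / 2.
Proof.
move=> Y0.
have h1 : ln (Y / 2) <= Y / 2 - 1.
  have e : 1 + (Y / 2 - 1) = Y / 2 by lra.
  have := @le_ln1Dx R (Y / 2 - 1); rewrite e; apply; lra.
have h2 : ln 2 <= 1 :> R.
  rewrite -[X in _ <= X](expRK 1) ler_ln ?posrE ?expR_gt0 //.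
  by apply: le_trans (expR_ge1Dx 1); lra.
have -> : ln Y = ln (Y / 2) + ln 2.
  rewrite -lnM ?posrE ?divr_gt0 // mulfVK //; lra.
lra.
Qed.

Lemma bound_ii (n K : nat) (D c : R) : (5 <= n)%N -> (0 < K)%N -> 0 <= D ->
  D <= 1 -> 0 < c ->
  (expR 1 + 2 + 2 * c) * ln n%:R / ln (ln n%:R) < K%:R ->
  n%:R * D ^+ K / (K`!)%:R <= expR (- c * ln n%:R).
Proof.
move=> n5 K0 D0 D1 c0 hK.
have np : (0:R) < n%:R by rewrite ltr0n (leq_trans _ n5).
have nE : n%:R = expR (ln n%:R) :> R by rewrite lnK // posrE.
have L1 : 1 < ln n%:R :> R.
  rewrite -ltr_expR -nE; apply: le_lt_trans e_le4 _.
  by rewrite ltr_nat.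
move: hK nE L1; set L := ln n%:R => hK nE L1.
have Y0 : 0 < ln L by rewrite ln_gt0.
move: hK Y0; set Y := ln L => hK Y0.
have e1 := expR_gt0 (1:R).
set C := expR 1 + 2 + 2 * c.
have C0 : 0 < C by rewrite /C; lra.
have L0 : 0 < L by lra.
set A := C * L / Y.
have A0 : 0 < A by rewrite /A divr_gt0 // mulr_gt0.
have kp : (0 : R) < K%:R by rewrite ltr0n.
move: hK kp (fact_lb K); set k := K%:R => hK kp hf.
have fp : (0 : R) < K`!%:R by rewrite ltr0n fact_gt0.
have lnC : 1 <= ln C.
  rewrite -[X in X <= _](expRK 1) ler_ln ?posrE //; rewrite /C; lra.
have lnA : ln A = ln C + Y - ln Y.
  by rewrite /A ln_div ?posrE ?mulr_gt0 // lnM ?posrE.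
have hY := ln_le_half Y0.
have lnA2 : 1 + Y / 2 <= ln A by rewrite lnA; lra.
have lnkA : ln A <= ln k by rewrite ler_ln ?posrE // ltW.
have h1 : k * (ln A - 1) <= k * (ln k - 1) by apply: ler_wpM2l; [exact: ltW | lra].
have h2 : A * (ln A - 1) <= k * (ln A - 1) by apply: ler_wpM2r; [lra | exact: ltW].
have h3 : A * (Y / 2) <= A * (ln A - 1) by apply: ler_wpM2l; [exact: ltW | lra].
have h4 : A * (Y / 2) = C * L / 2 by rewrite /A; field; rewrite gt_eqF.
have h5 : (1 + c) * L <= C * L / 2.
  rewrite mulrAC ler_wpM2r //; [exact: ltW | rewrite /C; lra].
have F : (1 + c) * L <= k * ln k - k.
  rewrite -[k in _ - k]mulr1 -mulrBr; lra.
have kE : k ^+ K = expR (k * ln k).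
  by rewrite mulrC /k expRM_natr lnK // posrE.
apply: le_trans (_ : n%:R / K`!%:R <= _).
  apply: ler_wpM2r; first by rewrite invr_ge0 ltW.
  rewrite -[X in _ <= X]mulr1.
  by apply: ler_wpM2l; [exact: ltW | exact: exprn_ile1].
apply: le_trans (_ : n%:R * (expR k / k ^+ K) <= _).
  apply: ler_wpM2l; first exact: ltW.
  by rewrite ler_pdivlMr ?exprn_gt0 // mulrC ler_pdivrMr.
rewrite kE nE mulrA -expRD mulrC -expRN -expRD ler_expR.
rewrite mulNr; rewrite mulrDl mul1r in F.
move: (k * ln k) (c * L) F => P Q F; lra.
Qed.

Lemma prob_compl n (P Q : pred {perm 'I_n}) :
  (forall pi, P pi || Q pi) -> 1 - prob_perm R Q <= prob_perm R P.
Proof.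
move=> H; rewrite /prob_perm.
have fp : (0:R) < #|{perm 'I_n}|%:R by rewrite card_Sn ltr0n fact_gt0.
rewrite lerBlDr -mulrDl ler_pdivlMr // mul1r -natrD ler_nat.
apply: leq_trans (_ : #|[set pi | P pi] :|: [set pi | Q pi]| <= _)%N; last first.
  exact: (leq_card_setU _ _).1.
rewrite -cardsT; apply: subset_leq_card; apply/subsetP => pi _; rewrite !inE.
exact: H.
Qed.

End An.

Theorem corollary4 (R : realType) :
  (* (i) delta = O(log n / d)  ==>  longest path O(log n) w.h.p. *)
  (forall C1 c : R, 0 < C1 -> 0 < c ->
    exists (C : R) (N : nat), forall n : nat, (N <= n)%N ->
    forall (d : nat) (e : rel 'I_n), (0 < d)%N ->
      simple_graph e -> max_degree_le e d ->
    forall delta : R, 0 < delta -> delta <= 1 ->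
      delta <= C1 * ln (n%:R : R) / d%:R ->
      1 - (n%:R : R) `^ (- c) <=
        prob_perm R (fun pi : {perm 'I_n} =>
          (longest_dpath e pi (delta_prefix pi delta))%:R <= C * ln (n%:R : R)))
  /\
  (* (ii) delta <= 1/d  ==>  longest path O(log n / log log n) w.h.p. *)
  (forall c : R, 0 < c ->
    exists (C : R) (N : nat), forall n : nat, (N <= n)%N ->
    forall (d : nat) (e : rel 'I_n), (0 < d)%N ->
      simple_graph e -> max_degree_le e d ->
    forall delta : R, 0 < delta -> delta <= 1 ->
      delta <= 1 / d%:R ->
      1 - (n%:R : R) `^ (- c) <=
        prob_perm R (fun pi : {perm 'I_n} =>
          (longest_dpath e pi (delta_prefix pi delta))%:R
            <= C * ln (n%:R : R) / ln (ln (n%:R : R)))).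
Proof.
split.
- move=> C1 c C10 c0.
  exists (expR 2 * C1 + 1 + c), 1%N => n n1 d e d0 _ Hd delta dl0 dl1 hdl.
  have L0 : 0 <= ln (n%:R : R) by rewrite ln_ge0 // ler1n.
  have e2 : 0 <= expR 2 * C1 :> R by rewrite mulr_ge0 ?expR_ge0 // ltW.
  have X0 : 0 <= (expR 2 * C1 + 1 + c) * ln (n%:R : R).
    by rewrite mulr_ge0 //; lra.
  move: X0; set X := (expR 2 * C1 + 1 + c) * ln (n%:R : R) => X0.
  set K := (Num.truncn X).+1.
  have KX : X < K%:R by rewrite /K truncnS_gt.
  have HPQ : forall pi : {perm 'I_n},
      ((longest_dpath e pi (delta_prefix pi delta))%:R <= X) ||
      (K <= longest_dpath e pi (delta_prefix pi delta))%N.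
    move=> pi; rewrite orbC; case: (leqP K _) => //= hl.
    apply: le_trans (_ : (Num.truncn X)%:R <= X); last by rewrite truncn_le.
    by rewrite ler_nat -ltnS.
  have pw : (n%:R : R) `^ (- c) = expR (- c * ln (n%:R : R)).
    by rewrite /powR pnatr_eq0 gtn_eqF.
  rewrite pw; apply: le_trans _ (@prob_compl R n
     (fun pi => (longest_dpath e pi (delta_prefix pi delta))%:R <= X)
     (fun pi => (K <= longest_dpath e pi (delta_prefix pi delta))%N) HPQ).
  rewrite lerD2l lerN2.
  apply: le_trans (prob_bound Hd (ltn0Sn _) dl0 dl1) _.
  apply: (@bound_i R n K (d%:R * delta) C1 c) => //.
  - by rewrite mulr_ge0 // ltW.
  - by rewrite mulrC -ler_pdivlMr ?ltr0n.
- move=> c c0.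
  exists (expR 1 + 2 + 2 * c), 5%N => n n5 d e d0 _ Hd delta dl0 dl1 hdl.
  have L1 : 1 < ln (n%:R : R).
    rewrite -ltr_expR lnK ?posrE ?ltr0n ?(leq_trans _ n5) //.
    by apply: le_lt_trans (e_le4 R) _; rewrite ltr_nat.
  have Y0 : 0 < ln (ln (n%:R : R)) by rewrite ln_gt0.
  have X0 : 0 <= (expR 1 + 2 + 2 * c) * ln (n%:R : R) / ln (ln (n%:R : R)).
    apply: divr_ge0; last exact: ltW.
    apply: mulr_ge0; last by lra.
    by have := expR_ge0 (1:R); lra.
  move: X0; set X := (expR 1 + 2 + 2 * c) * _ / _ => X0.
  set K := (Num.truncn X).+1.
  have KX : X < K%:R by rewrite /K truncnS_gt.
  have HPQ : forall pi : {perm 'I_n},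
      ((longest_dpath e pi (delta_prefix pi delta))%:R <= X) ||
      (K <= longest_dpath e pi (delta_prefix pi delta))%N.
    move=> pi; rewrite orbC; case: (leqP K _) => //= hl.
    apply: le_trans (_ : (Num.truncn X)%:R <= X); last by rewrite truncn_le.
    by rewrite ler_nat -ltnS.
  have pw : (n%:R : R) `^ (- c) = expR (- c * ln (n%:R : R)).
    by rewrite /powR pnatr_eq0 gtn_eqF // (leq_trans _ n5).
  rewrite pw; apply: le_trans _ (@prob_compl R n
     (fun pi => (longest_dpath e pi (delta_prefix pi delta))%:R <= X)
     (fun pi => (K <= longest_dpath e pi (delta_prefix pi delta))%N) HPQ).
  rewrite lerD2l lerN2.
  apply: le_trans (prob_bound Hd (ltn0Sn _) dl0 dl1) _.
  apply: bound_ii => //.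
  - by rewrite mulr_ge0 // ltW.
  - by rewrite mulrC -ler_pdivlMr ?ltr0n // -[1]/(1%:R) -[X in _ <= X / _]mulr1 mul1r.
Qed.
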